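(* Assume that for every $n$ and every $(x^n,y^n)$ the empirical risk $f\mapsto\frac1n\sum_i\ell(f(x_i),y_i)$ attains its minimum over $\mathcal{F}$, that $\eta:\mathbb{R}^+\to\mathbb{R}^+$ is concave and continuous with $|\ell(f(x),u)-\ell(f(x),u')|\le\eta(\ell(u,u'))$ for all $f\in\mathcal{F}$, $x\in\mathcal{X}$, $u,u'\in\mathcal{Y}$, and that there is a constant $C$ with $$\mathbb{E}\sup_{f\in\mathcal{F}}\Big|\frac1n\sum_{i=1}^n\ell(f(X_i),Y_i)-L(f,P)\Big|\le C/\sqrt n\quad\text{for all } n \text{ and all } P\in\mathcal{P}.$$ Let $e_n,d_n$ be arbitrary encoders/decoders at rate $R$, $\hat Y^n=d_n(X^n,e_n(X^n,Y^n))$, and let $\hat f_n$ be an empirical risk minimizer over $\mathcal{F}$ on $\{(X_i,\hat Y_i)\}_{i=1}^n$. Then for every $n$ and every $P\in\mathcal{P}$, $$\mathbb{E}\,L(\hat f_n,P)\le L^*(\mathcal{F},P)+2\eta\big(\mathbb{E}\,\ell_n(Y^n,\hat Y^n)\big)+2C/\sqrt n,$$ where $\ell_n(Y^n,\hat Y^n)=\frac1n\sum_{i=1}^n\ell(Y_i,\hat Y_i)$.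
   Context: $\mathcal{X}\subset\mathbb{R}^d$ measurable, $\mathcal{Y}$ finite or $\mathbb{R}$, $\mathcal{P}$ a family of distributions on $\mathcal{X}\times\mathcal{Y}$, $\ell:\mathcal{Y}\times\mathcal{Y}\to\mathbb{R}^+$, $\mathcal{F}$ a class of functions $\mathcal{X}\to\mathcal{Y}$; $L(f,P)=\mathbb{E}_P\ell(f(X),Y)$, $L^*(\mathcal{F},P)=\inf_{f\in\mathcal{F}}L(f,P)$. Training data $(X_i,Y_i)$, $i\le n$, are i.i.d. $P$; encoders $e_n:\mathcal{X}^n\times\mathcal{Y}^n\to\{1,\dots,2^{nR}\}$, decoders $d_n:\mathcal{X}^n\times\{1,\dots,2^{nR}\}\to\mathcal{Y}^n$; the generalization error is $L(\hat f_n,P)=\mathbb{E}[\ell(\hat f_n(X),Y)\mid X^n,Y^n]$ with $(X,Y)\sim P$ independent of the data. *)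

(* Defs.v *)
From HB Require Import structures.
From mathcomp Require Import all_boot all_order all_algebra.
From mathcomp Require Import all_classical all_reals all_analysis.
From mathcomp Require Import measurable_realfun.
Set Implicit Arguments.
Unset Strict Implicit.
Unset Printing Implicit Defensive.
Import Order.TTheory GRing.Theory Num.Theory.
Local Open Scope classical_set_scope.
Local Open Scope ring_scope.

Section Defs.
Context {R : realType}.

(** [Z 0, ..., Z (n-1)] are i.i.d. random elements of [T'] with common law [P],
    defined on the probability space [(Omega, mu)]: each is measurable, each has
    law [P], and they are mutually independent (product rule; taking some
    [A i = setT] gives the product rule for every subfamily). *)
Definition iid_sample {dO dT} {Omega : measurableType dO} {T : measurableType dT}
  (mu : probability Omega R) (n : nat) (Z : 'I_n -> Omega -> T)
  (P : probability T R) : Prop :=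
  [/\ (forall i, measurable_fun setT (Z i)),
      (forall i (A : set T), measurable A -> mu (Z i @^-1` A) = P A) &
      (forall A : 'I_n -> set T, (forall i, measurable (A i)) ->
         mu (\bigcap_i (Z i @^-1` A i)) = (\prod_(i < n) mu (Z i @^-1` A i))%E)].

Definition risk {dX dY} {X : measurableType dX} {Y : measurableType dY}
  (l : Y -> Y -> R) (f : X -> Y) (P : probability (X * Y)%type R) : \bar R :=
  (\int[P]_z (l (f z.1) z.2)%:E)%E.

Definition opt_risk {dX dY} {X : measurableType dX} {Y : measurableType dY}
  (l : Y -> Y -> R) (F : set (X -> Y)) (P : probability (X * Y)%type R) : \bar R :=
  ereal_inf [set risk l f P | f in F].

Definition emp_risk {X Y : Type} (l : Y -> Y -> R) (n : nat)
  (f : X -> Y) (xs : 'I_n -> X) (ys : 'I_n -> Y) : R :=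
  n%:R^-1 * \sum_(i < n) l (f (xs i)) (ys i).

Definition distortion {Y : Type} (l : Y -> Y -> R) (n : nat)
  (ys yh : 'I_n -> Y) : R :=
  n%:R^-1 * \sum_(i < n) l (ys i) (yh i).

Definition num_msgs (rate : R) (n : nat) : nat :=
  Num.truncn (powR 2 (n%:R * rate)).

Definition concave_on_nonneg (eta : R -> R) : Prop :=
  forall a b t, 0 <= a -> 0 <= b -> 0 <= t <= 1 ->
    t * eta a + (1 - t) * eta b <= eta (t * a + (1 - t) * b).

End Defs.

(* Main.v *)
Require Import Defs.
From HB Require Import structures.
From mathcomp Require Import all_boot all_order all_algebra.
From mathcomp Require Import all_classical all_reals all_analysis.
From mathcomp Require Import measurable_realfun.
Import Order.TTheory GRing.Theory Num.Theory numFieldNormedType.Exports.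
Local Open Scope classical_set_scope.
Local Open Scope ring_scope.
From mathcomp Require Import ring lra.

Lemma three_slope (R : realType) (eta : R -> R) t m u :
  concave_on_nonneg eta -> 0 <= t -> t < m -> m < u ->
  (m - t) * (eta u - eta m) <= (u - m) * (eta m - eta t).
Proof.
move=> hc t0 tm mu.
have ut : 0 < u - t by lra.
pose lam := (u - m) / (u - t).
have l01 : 0 <= lam <= 1.
  rewrite /lam; apply/andP; split; first by apply: divr_ge0; lra.
  by rewrite ler_pdivrMr //; lra.
have := hc t u lam t0 (ltW (le_lt_trans t0 (lt_trans tm mu))) l01.
have -> : lam * t + (1 - lam) * u = m.
  rewrite /lam; field; lra.
have -> : 1 - lam = (m - t) / (u - t) by rewrite /lam; field; lra.
rewrite /lam => H.
have H2 := ler_wpM2r (ltW ut) H.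
have E : ((u - m) / (u - t) * eta t + (m - t) / (u - t) * eta u) * (u - t)
   = (u - m) * eta t + (m - t) * eta u by field; lra.
rewrite E in H2; nra.
Qed.

Lemma supergrad (R : realType) (eta : R -> R) (m : R) :
  concave_on_nonneg eta -> 0 < m ->
  exists s, forall t, 0 <= t -> eta t <= eta m + s * (t - m).
Proof.
move=> hc m0.
pose S := [set (eta u - eta m) / (u - m) | u in [set u | m < u]].
have S0 : S !=set0 by exists ((eta (m+1) - eta m) / (m + 1 - m)), (m+1) => //=; lra.
have Sub : forall t, 0 <= t -> t < m -> ubound S ((eta m - eta t) / (m - t)).
  move=> t t0 tm _ [u /= mu <-].
  have h := @three_slope _ _ _ _ _ hc t0 tm mu.
  rewrite ler_pdivrMr; last lra.
  rewrite mulrAC ler_pdivlMr; last lra.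
  nra.
have hs : has_sup S by split => //; exists ((eta m - eta 0) / (m - 0)); exact: Sub.
exists (sup S) => t t0.
have [tm|mt|->] := ltgtP t m; last by lra.
- have : sup S <= (eta m - eta t) / (m - t) by apply: ge_sup => //; exact: Sub.
  rewrite ler_pdivlMr; last lra.
  nra.
- have : (eta t - eta m) / (t - m) <= sup S.
    by apply: sup_upper_bound => //; exists t.
  rewrite ler_pdivrMr; last lra.
  nra.
Qed.

Lemma jensen_fin (R : realType) (eta : R -> R) n (a : 'I_n -> R) :
  concave_on_nonneg eta -> (0 < n)%N -> (forall i, 0 <= a i) ->
  n%:R^-1 * \sum_(i < n) eta (a i) <= eta (n%:R^-1 * \sum_(i < n) a i).
Proof.
move=> hc n0 a0.
have nR : 0 < n%:R :> R by rewrite ltr0n.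
set m := n%:R^-1 * \sum_(i < n) a i.
have m0 : 0 <= m by rewrite /m mulr_ge0 ?invr_ge0 ?ler0n ?sumr_ge0.
have [mz|mp] := eqVneq m 0.
  have sz : \sum_(i < n) a i = 0.
    move: mz; rewrite /m => /eqP; rewrite mulf_eq0 invr_eq0 pnatr_eq0.
    by rewrite (negbTE (lt0n_neq0 n0)) /= => /eqP.
  have ai0 : forall i, a i = 0.
    by move=> i; move/eqP: sz; rewrite psumr_eq0 // => /allP /(_ i (mem_index_enum _)) /implyP /(_ isT) /eqP.
  rewrite mz; under eq_bigr do rewrite ai0.
  rewrite sumr_const card_ord -[eta 0 *+ n]mulr_natl mulrA mulVf ?mul1r //; lra.
have mp' : 0 < m by rewrite lt_neqAle eq_sym mp m0.
have [s hs] := @supergrad _ _ _ hc mp'.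
have : \sum_(i < n) eta (a i) <= \sum_(i < n) (eta m + s * (a i - m)).
  by apply: ler_sum => i _; exact: hs.
rewrite big_split /= sumr_const card_ord -mulr_sumr sumrB sumr_const card_ord.
have -> : \sum_(i < n) a i = n%:R * m by rewrite /m mulrA mulfV ?mul1r //; lra.
move=> H.
rewrite ler_pdivrMl //.
have E : s * (n%:R * m - m *+ n) = 0 by rewrite -[m *+ n]mulr_natl; ring.
by rewrite E addr0 -[eta m *+ n]mulr_natl in H.
Qed.

Lemma emp_dev (R : realType) (X Y : Type) (l : Y -> Y -> R) (eta : R -> R)
  n (f : X -> Y) (xs : 'I_n -> X) (ys yh : 'I_n -> Y) :
  concave_on_nonneg eta -> (0 < n)%N -> (forall u v, 0 <= l u v) ->
  (forall x u u', `|l (f x) u - l (f x) u'| <= eta (l u u')) ->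
  `|emp_risk l f xs ys - emp_risk l f xs yh| <= eta (distortion l ys yh).
Proof.
move=> hc n0 l0 hl.
rewrite /emp_risk /distortion -mulrBr -sumrB.
apply: le_trans; last exact: (@jensen_fin _ _ _ _ hc n0 (fun i => l0 (ys i) (yh i))).
rewrite normrM ger0_norm ?invr_ge0 ?ler0n //.
apply: ler_wpM2l; first by rewrite invr_ge0 ler0n.
apply: le_trans; first exact: ler_norm_sum.
by apply: ler_sum => i _; exact: hl.
Qed.

Theorem mainTheorem5
  (R : realType) (dX dY : measure_display)
  (X : measurableType dX) (Y : measurableType dY)
  (PP : set (probability (X * Y)%type R))
  (l : Y -> Y -> R) (F : set (X -> Y)) (eta : R -> R) (C rate : R)
  (* the loss takes values in R^+ *)
  (l_ge0 : forall u v, 0 <= l u v)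
  (* (X,Y) |-> l(f(X),Y) is measurable for f in F, so that L(f,P) makes sense *)
  (l_meas : forall f, F f -> measurable_fun setT (fun z : X * Y => l (f z.1) z.2))
  (* the empirical risk attains its minimum over F, for every n and (x^n,y^n) *)
  (erm_exists : forall (n : nat) (xs : 'I_n -> X) (ys : 'I_n -> Y),
     exists2 f, F f & forall g, F g -> emp_risk l f xs ys <= emp_risk l g xs ys)
  (* eta : R^+ -> R^+ concave and continuous *)
  (eta_ge0 : forall t, 0 <= t -> 0 <= eta t)
  (eta_concave : concave_on_nonneg eta)
  (eta_cont : {within [set x : R | 0 <= x], continuous eta})
  (eta_lip : forall f x u u', F f ->
     `|l (f x) u - l (f x) u'| <= eta (l u u'))
  (* uniform deviation bound: for all n, all P in PP, and an i.i.d. sample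
     (X_i,Y_i)_{i<n} ~ P (on any probability space),
     E sup_{f in F} |(1/n) sum_i l(f(X_i),Y_i) - L(f,P)| <= C / sqrt n *)
  (unif_dev : forall (n : nat), (0 < n)%N -> forall P, PP P ->
     forall (dO : measure_display) (O : measurableType dO)
            (mu : probability O R) (Z : 'I_n -> O -> X * Y),
     iid_sample mu Z P ->
     (\int[mu]_w ereal_sup
         [set `| (emp_risk l f (fun i => (Z i w).1) (fun i => (Z i w).2))%:E
                 - risk l f P | | f in F]
        <= (C / Num.sqrt n%:R)%:E)%E)
  (* block length n, data distribution P in PP, i.i.d. training data *)
  (n : nat) (n_gt0 : (0 < n)%N) (P : probability (X * Y)%type R) (PP_P : PP P)
  (dO : measure_display) (O : measurableType dO) (mu : probability O R)
  (Z : 'I_n -> O -> X * Y) (Z_iid : iid_sample mu Z P)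
  (* arbitrary encoder / decoder at rate [rate] *)
  (enc : ('I_n -> X) -> ('I_n -> Y) -> 'I_(num_msgs rate n))
  (dec : ('I_n -> X) -> 'I_(num_msgs rate n) -> ('I_n -> Y))
  (* fhat : an empirical risk minimizer over F on (X_i, Yhat_i)_{i<n},
     Yhat^n = dec(X^n, enc(X^n, Y^n)) *)
  (fhat : O -> X -> Y)
  (fhat_erm : forall w,
     let xs := fun i => (Z i w).1 in
     let ys := fun i => (Z i w).2 in
     let yh := dec xs (enc xs ys) in
     F (fhat w) /\
     forall g, F g -> emp_risk l (fhat w) xs yh <= emp_risk l g xs yh)
  (* measurability of the random quantities whose expectations are taken *)
  (fhat_meas : measurable_fun (setT : set O) ((fun w => risk l (fhat w) P) : O -> \bar R))
  (dev_meas : measurable_fun (setT : set O) ((fun w => ereal_sup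
         [set `| (emp_risk l f (fun i => (Z i w).1) (fun i => (Z i w).2))%:E
                 - risk l f P |%E | f in F]) : O -> \bar R))
  (dist_meas : measurable_fun setT (fun w =>
     let xs := fun i => (Z i w).1 in
     let ys := fun i => (Z i w).2 in
     distortion l ys (dec xs (enc xs ys))))
  (* E l_n(Y^n, Yhat^n) is finite, so that eta of it makes sense *)
  (dist_fin : (\int[mu]_w (let xs := fun i => (Z i w).1 in
                           let ys := fun i => (Z i w).2 in
                           distortion l ys (dec xs (enc xs ys)))%:E < +oo)%E) :
  (\int[mu]_w risk l (fhat w) P
     <= opt_risk l F P
        + (2 * eta (fine (\int[mu]_w (let xs := fun i => (Z i w).1 in
                                      let ys := fun i => (Z i w).2 in
                                      distortion l ys (dec xs (enc xs ys)))%:E)))%:E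
        + (2 * C / Num.sqrt n%:R)%:E)%E.
Proof.
pose dd := fun w => distortion l (fun i => (Z i w).2)
   (dec (fun i => (Z i w).1) (enc (fun i => (Z i w).1) (fun i => (Z i w).2))).
pose Dv := fun w => ereal_sup
         [set `| (emp_risk l f (fun i => (Z i w).1) (fun i => (Z i w).2))%:E
                 - risk l f P |%E | f in F].
have Eint : (\int[mu]_w (let xs := fun i => (Z i w).1 in
                           let ys := fun i => (Z i w).2 in
                           distortion l ys (dec xs (enc xs ys)))%:E)%E
            = (\int[mu]_w (dd w)%:E)%E by [].
rewrite Eint in dist_fin *.
have dd0 : forall w, 0 <= dd w.
  move=> w; rewrite /dd /distortion mulr_ge0 ?invr_ge0 ?ler0n ?sumr_ge0 //.
have int_dd0 : (0 <= \int[mu]_w (dd w)%:E)%E.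
  by apply: integral_ge0 => w _; rewrite lee_fin.
set m := fine _.
have m0 : 0 <= m by apply: fine_ge0.
have Em : (\int[mu]_w (dd w)%:E)%E = m%:E.
  by rewrite fineK // ge0_fin_numE.
have hU := unif_dev n n_gt0 P PP_P dO O mu Z Z_iid.
rewrite -/Dv in hU.
have rfin : forall f, F f -> risk l f P = (fine (risk l f P))%:E.
  move=> f Ff.
  have r0 : (0 <= risk l f P)%E by apply: integral_ge0 => z _; rewrite lee_fin.
  case E: (risk l f P) r0 => [r| |] // _.
  exfalso; move: hU.
  have -> : (\int[mu]_w Dv w)%E = (\int[mu]_w (cst +oo%E) w)%E.
    apply: eq_integral => w _ /=; apply/eqP; rewrite eq_le leey /=.
    apply: ereal_sup_ubound; exists f => //; rewrite E //.
  have h2 : (+oo * mu setT = +oo)%E by rewrite probability_setT mule1.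
  by rewrite integral_cst // h2 leNgt ltey.
have HD : forall w f, F f ->
    ((`|emp_risk l f (fun i => (Z i w).1) (fun i => (Z i w).2) - fine (risk l f P)|)%:E <= Dv w)%E.
  move=> w f Ff; apply: ereal_sup_ubound; exists f => //.
  by rewrite rfin // -EFinB.
have Dv0 : forall w, (0 <= Dv w)%E.
  move=> w; have [hf _] := fhat_erm w.
  exact: le_trans (HD w _ hf).
have Hpt : forall w g, F g -> (risk l (fhat w) P <=
    (fine (risk l g P) + 2 * eta (dd w))%:E + (Dv w + Dv w))%E.
  move=> w g Fg.
  have [hf herm] := fhat_erm w.
  have e1 := HD w _ hf.
  have e2 := HD w _ Fg.
  have h1 := @emp_dev _ _ _ l eta n (fhat w) (fun i => (Z i w).1) (fun i => (Z i w).2)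
     (dec (fun i => (Z i w).1) (enc (fun i => (Z i w).1) (fun i => (Z i w).2)))
     eta_concave n_gt0 l_ge0 (fun x u u' => @eta_lip (fhat w) x u u' hf).
  have h2 := @emp_dev _ _ _ l eta n g (fun i => (Z i w).1) (fun i => (Z i w).2)
     (dec (fun i => (Z i w).1) (enc (fun i => (Z i w).1) (fun i => (Z i w).2)))
     eta_concave n_gt0 l_ge0 (fun x u u' => @eta_lip g x u u' Fg).
  have h3 := herm g Fg.
  rewrite -/(dd w) in h1 h2.
  rewrite (rfin _ hf).
  move: e1 e2; case: (Dv w) => [r| |] e1 e2.
  - rewrite lee_fin in e1; rewrite lee_fin in e2.
    rewrite -!EFinD lee_fin.
    move: e1 e2 h1 h2; rewrite !ler_norml; lra.
  - by rewrite /= leey.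
  - by move: e1; rewrite leeNy_eq.
have mdd : measurable_fun setT (fun w => (dd w)%:E).
  exact/measurable_EFinP.
have [s [Hs Hs0]] : exists s, {ae mu, forall w, setT w -> eta (dd w) <= eta m + s * (dd w - m)}
    /\ (forall w, 0 <= eta m + s * (dd w - m)).
  have [mz|mp] := eqVneq m 0.
    exists 0; split; last by move=> w; rewrite mul0r addr0; exact: eta_ge0.
    have : (\int[mu]_(w in setT) `|(dd w)%:E|)%E = 0%E.
      under eq_integral do rewrite gee0_abs ?lee_fin //.
      by rewrite Em mz.
    move/(ae_eq_integral_abs mu measurableT mdd).
    by apply: filterS => w hw /hw /= [->]; rewrite mz mul0r addr0.
  have mp' : 0 < m by rewrite lt_neqAle eq_sym mp m0.
  have [s hs] := @supergrad _ _ _ eta_concave mp'.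
  exists s; split; first by apply: aeW => w _; exact: hs.
  move=> w; exact: le_trans (eta_ge0 _ (dd0 w)) (hs _ (dd0 w)).
have intD0 : (0 <= \int[mu]_w Dv w)%E by apply: integral_ge0 => w _; exact: Dv0.
have Dint : mu.-integrable setT Dv.
  apply/integrableP; split => //.
  under eq_integral do rewrite gee0_abs ?Dv0 //.
  exact: le_lt_trans hU (ltry _).
have ddint : mu.-integrable setT (fun w => (dd w)%:E).
  apply/integrableP; split => //.
  by under eq_integral do rewrite gee0_abs ?lee_fin //.
have h1 : forall a : R, (a%:E * mu setT)%E = a%:E by move=> a; rewrite probability_setT mule1.
have Key : forall g, F g -> (\int[mu]_w risk l (fhat w) P <=
    (fine (risk l g P) + 2 * eta m + 2 * C / Num.sqrt n%:R)%:E)%E.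
  move=> g Fg.
  have rg0 : 0 <= fine (risk l g P).
    by apply: fine_ge0; apply: integral_ge0 => z _; rewrite lee_fin.
  pose a := fine (risk l g P) + 2 * eta m - 2 * s * m.
  apply: (@le_trans _ _ (\int[mu]_w ((a%:E + (2*s)%:E * (dd w)%:E) + (Dv w + Dv w)))%E).
  - apply: ae_ge0_le_integral => //.
    + by move=> w _; apply: integral_ge0 => z _; rewrite lee_fin.
    + move=> w _; apply: adde_ge0; last by apply: adde_ge0; exact: Dv0.
      rewrite -EFinM -EFinD lee_fin.
      have := Hs0 w; rewrite /a; nra.
    + apply: emeasurable_funD; last exact: emeasurable_funD.
      apply: emeasurable_funD; first exact: measurable_cst.
      by apply: emeasurable_funM => //; exact: measurable_cst.
    + apply: filterS Hs => w hw _.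
      apply: le_trans (Hpt w g Fg) _; apply: leeD2r.
      rewrite -EFinM -EFinD lee_fin.
      have := hw I; rewrite /a; nra.
  - rewrite integralD //; last first.
      by apply: integrableD.
      apply: integrableD => //; first exact: finite_measure_integrable_cst.
      exact: integrableZl.
    rewrite integralD //; first last.
      exact: integrableZl.
      exact: finite_measure_integrable_cst.
    rewrite integralZl // Em integral_cst // h1 ge0_integralD //.
    move: hU intD0; case: (\int[mu]_w Dv w)%E => [r| |] //.
    rewrite !lee_fin => hr r0.
    rewrite /a; lra.
rewrite -addeA -EFinD -leeBlDr //.
apply: le_ereal_inf_tmp => _ [g Fg <-].
rewrite leeBlDr // (rfin g Fg) -EFinD.
apply: le_trans (Key g Fg) _; rewrite lee_fin; lra.
Qed.
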